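(* Let $0<l<m<n$ be pairwise coprime square-free integers and let $K=\mathbb{Q}(\sqrt{ml},\sqrt{nl})$. Then \[ \tfrac{1}{48}\, n \le M(\mathcal{O}_K). \]
   Context: For a nonconstant polynomial $f(x)=c\prod_{i=1}^d (x-\alpha_i)\in\mathbb{C}[x]$, the Mahler measure is $M(f)=|c|\prod_{|\alpha_i|\ge 1}|\alpha_i|$. For an algebraic number $\alpha$, $M(\alpha)$ is the Mahler measure of its minimal polynomial over $\mathbb{Z}$ (with content $1$). For a number field $K$ with ring of integers $\mathcal{O}_K$, $M(\mathcal{O}_K)=\min\{M(\alpha):\alpha\in\mathcal{O}_K,\ \mathbb{Q}(\alpha)=K\}$. *)

(* Defs.v *)
From mathcomp Require Import all_boot all_order all_algebra all_field.
Set Implicit Arguments. Unset Strict Implicit. Unset Printing Implicit Defensive.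
Import Order.TTheory GRing.Theory Num.Theory.
Local Open Scope ring_scope.

Definition squarefree (n : nat) : Prop :=
  forall p : nat, prime p -> ~~ (p * p %| n)%N.

(* Mahler measure of a polynomial over algC:
   M(f) = |c| * prod_{roots a} max(1, |a|)  (roots with multiplicity) *)
Definition mahler (f : {poly algC}) : algC :=
  `|lead_coef f| *
  \prod_(z <- sval (closed_field_poly_normal f)) Num.max 1 `|z|.

(* p is the minimal polynomial of x over Z with content 1:
   an integer polynomial with content 1 (and positive leading coefficient,
   as zcontents carries the sign of the leading coefficient) which is a
   nonzero multiple of the monic minimal polynomial of x over Q. *)
Definition minpolyZ (x : algC) (p : {poly int}) : Prop :=
  zcontents p = 1 /\
  exists c : algC, c != 0 /\ map_poly intr p = c *: minCpoly x.

Definition mahler_alg (x : algC) (m : algC) : Prop :=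
  exists p : {poly int}, minpolyZ x p /\ m = mahler (map_poly intr p).

Definition in_biquad (a b : nat) (x : algC) : Prop :=
  exists u v w t : rat,
    x = ratr u + ratr v * sqrtC a%:R + ratr w * sqrtC b%:R
        + ratr t * (sqrtC a%:R * sqrtC b%:R).

(* Q(x) = Q[x] for algebraic x: rational polynomial expressions in x *)
Definition in_Qadj (x y : algC) : Prop :=
  exists p : {poly rat}, y = (map_poly ratr p).[x].

Definition generates_biquad (a b : nat) (x : algC) : Prop :=
  in_biquad a b x /\ in_Qadj x (sqrtC a%:R) /\ in_Qadj x (sqrtC b%:R).

(* Main.v *)
Require Import Defs.
From mathcomp Require Import all_boot all_order all_algebra all_field.
From mathcomp Require Import ring lra zify.
Import Order.TTheory GRing.Theory Num.Theory.
Local Open Scope ring_scope.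

Lemma sqf_int (k : nat) (r : rat) : squarefree k ->
  (r ^+ 2 * k%:R) \is a Num.int -> r \is a Num.int.
Proof.
move=> sk /intrP [z Hz].
have den0 : (denq r)%:~R != 0 :> rat by rewrite intr_eq0 denq_neq0.
have E : (numq r ^+ 2 * k%:R = z * denq r ^+ 2 :> int).
  apply: (@intr_inj rat); rewrite !rmorphM /= rmorph_nat numqE -Hz; ring.

have E2 : (`|numq r| ^ 2 * k = `|z| * `|denq r| ^ 2)%N.
  have := congr1 absz E; rewrite !abszM /= natz absz_nat => ->; by rewrite !expnS expn0 !muln1.
have cop := coprime_num_den r.
have Hd : (`|denq r| ^ 2 %| k)%N.
  rewrite -(@Gauss_dvdr _ (`|numq r| ^ 2)); last by rewrite coprimeXl // coprime_sym coprimeXl.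
  by rewrite E2 dvdn_mull.
rewrite Qint_def; apply/eqP.
case: (ltngtP `|denq r| 1) => H.
- by move: H; rewrite ltnS leqn0 absz_eq0 (negbTE (denq_neq0 r)).
- have pp := pdiv_prime H.
  have := sk _ pp; rewrite (dvdn_trans _ Hd) //.
  by rewrite expnS expn1 dvdn_mul // pdiv_dvd.
- by rewrite -(gez0_abs (ltW (denq_gt0 r))) H.
Qed.

Lemma sqf1 : squarefree 1.
Proof.
move=> p pp; rewrite dvdn1 muln_eq1 andbb; apply/negP => /eqP p1.
by rewrite p1 in pp.
Qed.

Lemma nosq (k : nat) (r : rat) : squarefree k -> (1 < k)%N -> r ^+ 2 = k%:R -> False.
Proof.
move=> sk k1 E.
have /intrP [z Hz] : r \is a Num.int.
  by apply: (@sqf_int 1) sqf1 _; rewrite mulr1 E rpred_nat.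
have Ez : (`|z| ^ 2 = k)%N.
  have Ei : z ^+ 2 = k%:R :> int.
    by apply: (@intr_inj rat); rewrite rmorphXn /= rmorph_nat -Hz E.
  by have := congr1 absz Ei; rewrite abszX natz absz_nat.
case: (ltnP 1 `|z|) => H.
  have pp := pdiv_prime H; have := sk _ pp.
  by rewrite -Ez expnS expn1 dvdn_mul // pdiv_dvd.
have : (`|z| ^ 2 <= 1)%N by rewrite expnS expn1 -[1%N]/(1*1)%N leq_mul.
by rewrite Ez leqNgt k1.
Qed.

Lemma sqf_mul (a b : nat) : coprime a b -> squarefree a -> squarefree b ->
  squarefree (a * b).
Proof.
move=> cab sa sb p pp; apply/negP => H.
case: (boolP (p %| a))%N => pa.
- have cpb : coprime p b by apply: coprime_dvdl pa cab.
  have : coprime (p * p) b by rewrite coprimeMl cpb.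
  by move=> c; move: H; rewrite Gauss_dvdl // => H; have := sa _ pp; rewrite H.
- have cpa : coprime p a by rewrite prime_coprime.
  have : coprime (p * p) a by rewrite coprimeMl cpa.
  by move=> c; move: H; rewrite Gauss_dvdr // => H; have := sb _ pp; rewrite H.
Qed.

Lemma ratr_sq_neq (K : nat) (s : algC) : (forall q : rat, q ^+ 2 != K%:R) ->
  s ^+ 2 = K%:R -> forall q : rat, s != ratr q.
Proof.
move=> hK hs q; apply/eqP => E; have := hK q; rewrite -(inj_eq (fmorph_inj (@ratr algC))).
by rewrite rmorphXn rmorph_nat /= -E hs eqxx.
Qed.

Lemma indep2 (K : nat) (s : algC) : (forall q : rat, q ^+ 2 != K%:R) ->
  s ^+ 2 = K%:R -> forall a b : rat, ratr a + ratr b * s = 0 -> a = 0 /\ b = 0.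
Proof.
move=> hK hs a b E.
have b0 : b = 0.
  case: (eqVneq b 0) => // bn0; exfalso; move/negP: (@ratr_sq_neq K s hK hs (- a / b)); apply.
  rewrite fmorph_div rmorphN /=.
  have rb : ratr b != 0 :> algC by rewrite fmorph_eq0.
  have -> : s = - ratr a / ratr b.
    by apply: (mulIf rb); rewrite mulfVK // mulrC; apply/eqP; rewrite -addr_eq0 addrC E.
  by rewrite eqxx.
split=> //; move: E; rewrite b0 rmorph0 mul0r addr0 => /eqP.
by rewrite fmorph_eq0 => /eqP.
Qed.


Lemma indep4 (A B : nat) (sA sB : algC) :
  (forall q : rat, q ^+ 2 != A%:R) -> (forall q : rat, q ^+ 2 != B%:R) ->
  (forall q : rat, q ^+ 2 != (A * B)%:R) ->
  sA ^+ 2 = A%:R -> sB ^+ 2 = B%:R ->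
  forall a b c d : rat,
  ratr a + ratr b * sA + ratr c * sB + ratr d * (sA * sB) = 0 ->
  [/\ a = 0, b = 0, c = 0 & d = 0].
Proof.
move=> hA hB hAB hsA hsB a b c d E.
suff [c0 d0] : c = 0 /\ d = 0.
  move: E; rewrite c0 d0 rmorph0 !mul0r !addr0 => E.
  by have [] := @indep2 A sA hA hsA a b E.
have [/andP [/eqP c0 /eqP d0] | cdn0] := boolP ((c == 0) && (d == 0)); first by [].
exfalso.
pose N := c ^+ 2 - d ^+ 2 * A%:R.
have N0 : N != 0.
  apply/eqP => N0; case: (eqVneq d 0) => d0.
    move: N0 cdn0; rewrite /N d0 expr0n /= mul0r subr0 => /eqP.
    by rewrite expf_eq0 /= => ->.
  move/eqP: (hA (c / d)); apply.
  have cE : c ^+ 2 = d ^+ 2 * A%:R by apply/eqP; rewrite -subr_eq0 -/N N0.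
  by rewrite expr_div_n cE mulrC mulKf ?expf_neq0.
pose p := (a * c - b * d * A%:R) / N.
pose q := (b * c - a * d) / N.
have E' : sB * (ratr c + ratr d * sA) = - (ratr a + ratr b * sA).
  have : sB * (ratr c + ratr d * sA) + (ratr a + ratr b * sA) = 0.
    rewrite -E. clear q p N0 N E cdn0 hsA hsB hA hB hAB. ring.
  by move/eqP; rewrite addr_eq0 => /eqP.
have rN : ratr N != 0 :> algC by rewrite fmorph_eq0.
have HsB : sB = - (ratr p + ratr q * sA).
  apply: (mulIf rN).
  have -> : - (ratr p + ratr q * sA) * ratr N =
      - (ratr (p * N) + ratr (q * N) * sA) by rewrite ?(rmorphD, rmorphB, rmorphM, rmorphN, rmorphXn, rmorph_nat, rmorph0, rmorph1) /=; ring.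
  rewrite /p /q !mulfVK //.
  have -> : ratr N = (ratr c + ratr d * sA) * (ratr c - ratr d * sA) :> algC.
    by rewrite /N; rewrite ?(rmorphD, rmorphB, rmorphM, rmorphN, rmorphXn, rmorph_nat, rmorph0, rmorph1) /=; rewrite -hsA; ring.
  rewrite mulrA E'; rewrite ?(rmorphD, rmorphB, rmorphM, rmorphN, rmorphXn, rmorph_nat, rmorph0, rmorph1) /=; rewrite -hsA; ring.
clearbody p q.
have E2 : ratr (p ^+ 2 + q ^+ 2 * A%:R - B%:R) + ratr (2%:R * p * q) * sA = 0 :> algC.
  rewrite ?(rmorphD, rmorphB, rmorphM, rmorphN, rmorphXn, rmorph_nat, rmorph0, rmorph1) /=; rewrite -hsB HsB -hsA; ring.
have [/eqP e1 /eqP e2] := @indep2 A sA hA hsA _ _ E2.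
move: e2; rewrite !mulf_eq0 pnatr_eq0 /= => /orP [/eqP p0 | /eqP q0].
- move/eqP: (hAB (q * A%:R)); apply; apply/eqP.
  move: e1; rewrite p0 expr0n /= add0r subr_eq0 => /eqP e1.
  by rewrite natrM -e1; apply/eqP; ring.
- move/eqP: (hB p); apply; apply/eqP.
  by move: e1; rewrite q0 expr0n /= mul0r addr0 subr_eq0.
Qed.

Definition bq (s r : algC) (a b c d : rat) : algC :=
  ratr a + ratr b * s + ratr c * r + ratr d * (s * r).

Lemma transfer (A B : nat) (u v w t : rat) (f : {poly rat}) :
  exists a b c d : rat, forall s r : algC, s ^+ 2 = A%:R -> r ^+ 2 = B%:R ->
    (map_poly ratr f).[bq s r u v w t] = bq s r a b c d.
Proof.
elim/poly_ind: f => [|f k [a [b [c [d IH]]]]].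
  by exists 0, 0, 0, 0 => s r _ _; rewrite map_poly0 horner0 /bq !rmorph0 !mul0r !addr0.
exists (a*u + b*v*A%:R + c*w*B%:R + d*t*A%:R*B%:R + k), (a*v + b*u + (c*t + d*w)*B%:R),
  (a*w + c*u + (b*t + d*v)*A%:R), (a*t + d*u + b*w + c*v) => s r hs hr.
rewrite rmorphD rmorphM /= map_polyX map_polyC hornerMXaddC IH //= /bq.
rewrite ?(rmorphD, rmorphB, rmorphM, rmorphN, rmorphXn, rmorph_nat, rmorph0, rmorph1) /=.
rewrite -hs -hr; ring.
Qed.

Lemma maxF (z : algC) : 1 <= Num.max 1 `|z| /\ `|z| <= Num.max 1 `|z|.
Proof.
case: (@real_leP _ 1 `|z| (real1 _) (normr_real z)) => H; split=> //.
exact: ltW.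
Qed.

Lemma prod_ge1 (rs : seq algC) : 1 <= \prod_(z <- rs) Num.max 1 `|z|.
Proof.
by elim: rs => [|z rs IH]; rewrite ?big_nil ?big_cons // mulr_ege1 // (maxF z).1.
Qed.

Lemma prod_sub (s rs : seq algC) : uniq s -> {subset s <= rs} ->
  \prod_(z <- s) Num.max 1 `|z| <= \prod_(z <- rs) Num.max 1 `|z|.
Proof.
elim: s rs => [|x s IH] rs; first by rewrite big_nil => _ _; apply: prod_ge1.
move=> /= /andP [xs us] sub.
have xr : x \in rs by apply: sub; rewrite inE eqxx.
rewrite big_cons (perm_big _ (perm_to_rem xr)) big_cons /=.
apply: ler_pM; first by apply: le_trans (maxF x).1.
  by apply: le_trans (prod_ge1 _).
  by [].
apply: IH => // y ys.
have : y \in x :: rem x rs by rewrite -(perm_mem (perm_to_rem xr)) sub // inE ys orbT.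
rewrite inE => /orP [/eqP yx|] //.
by move: xs; rewrite -yx ys.
Qed.

Lemma ratr_int (q : rat) : (ratr q : algC) \is a Num.int -> q \is a Num.int.
Proof.
move=> /intrP [z Hz]; apply/intrP; exists z.
by apply: (fmorph_inj (@ratr algC)); rewrite rmorph_int; exact: Hz.
Qed.

Lemma bqB (s r : algC) a b c d a' b' c' d' :
  bq s r a b c d - bq s r a' b' c' d' = bq s r (a - a') (b - b') (c - c') (d - d').
Proof.
rewrite /bq ?(rmorphD, rmorphB, rmorphM, rmorphN, rmorphXn, rmorph_nat, rmorph0, rmorph1) /=.
ring.
Qed.

Lemma conj_val (A B : nat) (sA sB : algC) :
  (forall q : rat, q ^+ 2 != A%:R) -> (forall q : rat, q ^+ 2 != B%:R) ->
  (forall q : rat, q ^+ 2 != (A * B)%:R) ->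
  sA ^+ 2 = A%:R -> sB ^+ 2 = B%:R ->
  forall (u v w t : rat) (f : {poly rat}) (k1 k2 k3 k4 : rat),
  (map_poly ratr f).[bq sA sB u v w t] = bq sA sB k1 k2 k3 k4 ->
  forall s r : algC, s ^+ 2 = A%:R -> r ^+ 2 = B%:R ->
  (map_poly ratr f).[bq s r u v w t] = bq s r k1 k2 k3 k4.
Proof.
move=> hA hB hAB hsA hsB u v w t f k1 k2 k3 k4 E s r hs hr.
have [a [b [c [d T]]]] := @transfer A B u v w t f.
move: E; rewrite T // => /eqP; rewrite -subr_eq0 bqB => /eqP E.
have [/eqP e1 /eqP e2 /eqP e3 /eqP e4] := @indep4 A B sA sB hA hB hAB hsA hsB _ _ _ _ E.
move: e1 e2 e3 e4; rewrite !subr_eq0 => /eqP <- /eqP <- /eqP <- /eqP <-.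
exact: T.
Qed.

Theorem proposition3p1 (l m n : nat) :
  (0 < l)%N -> (l < m)%N -> (m < n)%N ->
  coprime l m -> coprime l n -> coprime m n ->
  squarefree l -> squarefree m -> squarefree n ->
  forall (x : algC) (Mx : algC),
    x \in Aint -> generates_biquad (m * l) (n * l) x ->
    mahler_alg x Mx ->
    n%:R / 48%:R <= Mx.
Proof.
move=> l0 lm mn clm cln cmn sl sm sn x Mx xA
  [[u [v [w [t Ex]]]] [[g Eg] [h Eh]]] [p [[_ [c [c0 Ep]]] EM]].
set A := (m * l)%N in Ex Eg Eh *.
set B := (n * l)%N in Ex Eg Eh *.
set sA := sqrtC A%:R in Ex Eg Eh *.
set sB := sqrtC B%:R in Ex Eg Eh *.
have hsA : sA ^+ 2 = A%:R by rewrite sqrtCK.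
have hsB : sB ^+ 2 = B%:R by rewrite sqrtCK.
have hsAn : (- sA) ^+ 2 = A%:R by rewrite sqrrN.
have hsBn : (- sB) ^+ 2 = B%:R by rewrite sqrrN.
have sqA : squarefree A by apply: sqf_mul => //; rewrite coprime_sym.
have sqB : squarefree B by apply: sqf_mul => //; rewrite coprime_sym.
have sqMN : squarefree (m * n) by apply: sqf_mul.
have A1 : (1 < A)%N by rewrite /A; nia.
have B1 : (1 < B)%N by rewrite /B; nia.
have MN1 : (1 < m * n)%N by nia.
have hA : forall q : rat, q ^+ 2 != A%:R.
  by move=> q; apply/eqP => E; apply: (@nosq A q sqA A1 E).
have hB : forall q : rat, q ^+ 2 != B%:R.
  by move=> q; apply/eqP => E; apply: (@nosq B q sqB B1 E).
have ABeq : (A * B = (m * n) * (l * l))%N by rewrite /A /B mulnACA.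
have l0R : (l%:R : rat) != 0 by rewrite pnatr_eq0 -lt0n.
have hAB : forall q : rat, q ^+ 2 != (A * B)%:R.
  move=> q; apply/eqP => E; apply: (@nosq (m * n) (q / l%:R) sqMN MN1).
  by rewrite expr_div_n E ABeq natrM [((l * l)%N)%:R]natrM -expr2 mulfK // expf_neq0.
have Ex' : x = bq sA sB u v w t by rewrite Ex.
have [p0 [Dp0 mon0] _] := minCpolyP x.
have R0 : (map_poly ratr p0).[bq sA sB u v w t] = bq sA sB 0 0 0 0.
  by rewrite -Ex' -Dp0 /bq !rmorph0 !mul0r !addr0; apply/eqP; exact: root_minCpoly.
have root_s : forall s r, s ^+ 2 = A%:R -> r ^+ 2 = B%:R ->
    root (minCpoly x) (bq s r u v w t).
  move=> s r hs hr; rewrite Dp0 /root.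
  rewrite (@conj_val A B sA sB hA hB hAB hsA hsB u v w t p0 0 0 0 0 R0 s r hs hr).
  by rewrite /bq !rmorph0 !mul0r !addr0.
have GX : forall s r, s ^+ 2 = A%:R -> r ^+ 2 = B%:R ->
    (map_poly ratr g).[bq s r u v w t] = s.
  have G0 : (map_poly ratr g).[bq sA sB u v w t] = bq sA sB 0 1 0 0.
    by rewrite -Ex' -Eg /bq !rmorph0 rmorph1 !mul0r mul1r !add0r !addr0.
  move=> s r hs hr.
  rewrite (@conj_val A B sA sB hA hB hAB hsA hsB u v w t g 0 1 0 0 G0 s r hs hr).
  by rewrite /bq !rmorph0 rmorph1 !mul0r mul1r !add0r !addr0.
have HX : forall s r, s ^+ 2 = A%:R -> r ^+ 2 = B%:R ->
    (map_poly ratr h).[bq s r u v w t] = r.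
  have H0 : (map_poly ratr h).[bq sA sB u v w t] = bq sA sB 0 0 1 0.
    by rewrite -Ex' -Eh /bq !rmorph0 rmorph1 !mul0r mul1r !add0r !addr0.
  move=> s r hs hr.
  rewrite (@conj_val A B sA sB hA hB hAB hsA hsB u v w t h 0 0 1 0 H0 s r hs hr).
  by rewrite /bq !rmorph0 rmorph1 !mul0r mul1r !add0r !addr0.
have nsA : sA != - sA.
  apply/eqP => E; have sA0 : sA = 0.
    have : sA *+ 2 == 0 by rewrite mulr2n {1}E addNr.
    by rewrite mulrn_eq0 /= => /eqP.
  move: hsA; rewrite sA0 expr0n /= => /eqP; rewrite eq_sym pnatr_eq0.
  by move/eqP => A0; move: A1; rewrite A0.
have nsB : sB != - sB.
  apply/eqP => E; have sB0 : sB = 0.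
    have : sB *+ 2 == 0 by rewrite mulr2n {1}E addNr.
    by rewrite mulrn_eq0 /= => /eqP.
  move: hsB; rewrite sB0 expr0n /= => /eqP; rewrite eq_sym pnatr_eq0.
  by move/eqP => B0; move: B1; rewrite B0.
have dG : forall s r s' r', s ^+ 2 = A%:R -> r ^+ 2 = B%:R -> s' ^+ 2 = A%:R -> r' ^+ 2 = B%:R ->
    s != s' -> bq s r u v w t != bq s' r' u v w t.
  move=> s r s' r' hs hr hs' hr' ns; apply/eqP => E; move/eqP: ns; apply.
  by rewrite -(GX s r hs hr) E GX.
have dH : forall s r s' r', s ^+ 2 = A%:R -> r ^+ 2 = B%:R -> s' ^+ 2 = A%:R -> r' ^+ 2 = B%:R ->
    r != r' -> bq s r u v w t != bq s' r' u v w t.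
  move=> s r s' r' hs hr hs' hr' ns; apply/eqP => E; move/eqP: ns; apply.
  by rewrite -(HX s r hs hr) E HX.
have Ai : forall s r, s ^+ 2 = A%:R -> r ^+ 2 = B%:R -> bq s r u v w t \in Aint.
  move=> s r hs hr; apply: (root_monic_Aint (root_s s r hs hr) (minCpoly_monic x)).
  exact: xA.
have d12 := dH _ _ _ _ hsA hsB hsA hsBn nsB.
have d13 := dG _ _ _ _ hsA hsB hsAn hsB nsA.
have d14 := dG _ _ _ _ hsA hsB hsAn hsBn nsA.
have d23 := dG _ _ _ _ hsA hsBn hsAn hsB nsA.
have d24 := dG _ _ _ _ hsA hsBn hsAn hsBn nsA.
have d34 := dH _ _ _ _ hsAn hsB hsAn hsBn nsB.
set x1 := bq sA sB u v w t in d12 d13 d14 *.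
set x2 := bq sA (- sB) u v w t in d12 d23 d24 *.
set x3 := bq (- sA) sB u v w t in d13 d23 d34 *.
set x4 := bq (- sA) (- sB) u v w t in d14 d24 d34 *.
have A1i : x1 \in Aint by apply: Ai.
have A2i : x2 \in Aint by apply: Ai.
have A3i : x3 \in Aint by apply: Ai.
have A4i : x4 \in Aint by apply: Ai.
have alphaE : ((x1 - x2) + (x3 - x4)) ^+ 2 = ratr ((4%:R * w) ^+ 2 * B%:R).
  transitivity ((4%:R * ratr w) ^+ 2 * sB ^+ 2).
    by rewrite /x1 /x2 /x3 /x4 /bq; ring.
  rewrite hsB /B natrM.
  rewrite ?(rmorphD, rmorphB, rmorphM, rmorphN, rmorphXn, rmorph_nat, rmorph0, rmorph1) /=.
  ring.
have hAB' : (sA * sB) ^+ 2 = (m * n)%:R * l%:R ^+ 2.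
  by rewrite exprMn hsA hsB -natrM ABeq natrM [((l * l)%N)%:R]natrM -expr2.
have betaE : ((x1 - x2) - (x3 - x4)) ^+ 2 = ratr ((4%:R * t * l%:R) ^+ 2 * (m * n)%:R).
  transitivity ((4%:R * ratr t) ^+ 2 * (sA * sB) ^+ 2).
    by rewrite /x1 /x2 /x3 /x4 /bq; ring.
  rewrite hAB'.
  rewrite ?(rmorphD, rmorphB, rmorphM, rmorphN, rmorphXn, rmorph_nat, rmorph0, rmorph1) /=.
  ring.
have Wi : 4%:R * w \is a Num.int.
  apply: (@sqf_int B) sqB _; apply: ratr_int; rewrite -alphaE.
  apply: Cint_rat_Aint; first by rewrite alphaE Crat_rat.
  by rewrite rpredX // rpredD // rpredB.
have Si : 4%:R * t * l%:R \is a Num.int.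
  apply: (@sqf_int (m * n)) sqMN _; apply: ratr_int; rewrite -betaE.
  apply: Cint_rat_Aint; first by rewrite betaE Crat_rat.
  by rewrite rpredX // !rpredB.
have PE : (x1 - x2) * (x3 - x4) * 4%:R =
    ratr (n%:R * (l%:R * (4%:R * w) ^+ 2 - m%:R * (4%:R * t * l%:R) ^+ 2)).
  transitivity (4%:R * (4%:R * ratr w ^+ 2 * sB ^+ 2 - 4%:R * ratr t ^+ 2 * (sA * sB) ^+ 2)).
    by rewrite /x1 /x2 /x3 /x4 /bq; ring.
  rewrite hAB' hsB /B natrM.
  rewrite ?(rmorphD, rmorphB, rmorphM, rmorphN, rmorphXn, rmorph_nat, rmorph0, rmorph1) /=.
  ring.
have Z0 : l%:R * (4%:R * w) ^+ 2 - m%:R * (4%:R * t * l%:R) ^+ 2 != 0.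
  apply/eqP => /eqP; rewrite subr_eq0 => /eqP EZ.
  case: (eqVneq (4%:R * t * l%:R) 0) => S0.
  - move: EZ; rewrite S0 expr0n /= mulr0 => /eqP; rewrite mulf_eq0 (negbTE l0R) /=.
    rewrite expf_eq0 /= mulf_eq0 pnatr_eq0 /= => /eqP w0.
    move: S0 => /eqP; rewrite !mulf_eq0 pnatr_eq0 (negbTE l0R) /= orbF => /eqP t0.
    by move: d12; rewrite /x1 /x2 /bq w0 t0 rmorph0 !mul0r eqxx.
  - apply: (negP (hA (l%:R * (4%:R * w) / (4%:R * t * l%:R)))); apply/eqP.
    have E2 : (l%:R * (4%:R * w)) ^+ 2 = (m * l)%:R * (4%:R * t * l%:R) ^+ 2.
      by rewrite exprMn expr2 -mulrA EZ natrM; ring.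
    by rewrite expr_div_n E2 mulfK // expf_neq0.
have /intrP [zz Zz] : l%:R * (4%:R * w) ^+ 2 - m%:R * (4%:R * t * l%:R) ^+ 2 \is a Num.int.
  by rewrite rpredB // rpredM ?rpred_nat ?rpredX.
have lowb : n%:R <= `|(x1 - x2) * (x3 - x4) * 4%:R|.
  rewrite PE rmorphM rmorph_nat /= normrM normr_nat Zz rmorph_int.
  apply: ler_peMr; first exact: ler0n.
  apply: norm_intr_ge1; first exact: intr_int.
  by rewrite intr_eq0; move: Z0; rewrite Zz intr_eq0.
have bnd : forall a b : algC, `|a - b| <= 2%:R * (Num.max 1 `|a| * Num.max 1 `|b|).
  move=> a b; apply: le_trans (ler_normB a b) _.
  have [a1 a2] := maxF a; have [b1 b2] := maxF b.
  have a0 : 0 <= Num.max 1 `|a| by apply: le_trans a1.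
  have b0 : 0 <= Num.max 1 `|b| by apply: le_trans b1.
  rewrite mulr_natl mulr2n; apply: lerD.
    by apply: le_trans a2 _; apply: ler_peMr.
  by apply: le_trans b2 _; rewrite mulrC; apply: ler_peMr.
move: EM; rewrite /mahler; case: closed_field_poly_normal => rs /= Hrs EM.
have lcf : lead_coef (map_poly intr p) = c.
  by rewrite Ep lead_coefZ (monicP (minCpoly_monic x)) mulr1.
have in_rs : forall s r, s ^+ 2 = A%:R -> r ^+ 2 = B%:R -> bq s r u v w t \in rs.
  move=> s r hs hr.
  have : root (map_poly intr p) (bq s r u v w t) by rewrite Ep rootZ // root_s.
  by rewrite {1}Hrs rootZ ?lcf // root_prod_XsubC.
have cint : c \is a Num.int by rewrite -lcf lead_coefE coef_map /= intr_int.
have c1 : 1 <= `|c| by apply: norm_intr_ge1.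
set F := fun z : algC => Num.max 1 `|z|.
have F0 : forall z, 0 <= F z by move=> z; apply: le_trans (maxF z).1.
have sub := @prod_sub [:: x1; x2; x3; x4] rs.
rewrite !big_cons big_nil mulr1 in sub.
have T4 : F x1 * (F x2 * (F x3 * F x4)) <= \prod_(z <- rs) F z.
  apply: sub.
    by rewrite /= !inE !negb_or d12 d13 d14 d23 d24 d34.
  by move=> z; rewrite !inE => /or4P [] /eqP ->; apply: in_rs.
have T0 : 0 <= \prod_(z <- rs) F z by apply: le_trans (prod_ge1 rs).
have TM : \prod_(z <- rs) F z <= Mx.
  by rewrite EM lcf; apply: ler_peMl.
have up : `|(x1 - x2) * (x3 - x4) * 4%:R| <= 16%:R * Mx.
  rewrite !normrM normr_nat.
  apply: (@le_trans _ _ ((2%:R * (F x1 * F x2)) * (2%:R * (F x3 * F x4)) * 4%:R)).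
    rewrite ler_pM2r ?ltr0n //.
    by apply: ler_pM; rewrite ?normr_ge0 ?bnd.
  apply: (@le_trans _ _ (16%:R * (F x1 * (F x2 * (F x3 * F x4))))).
    by rewrite le_eqVlt; apply/orP; left; apply/eqP; ring.
  apply: ler_wpM2l; first exact: ler0n.
  exact: le_trans T4 TM.
have nM : n%:R <= 16%:R * Mx := le_trans lowb up.
have M0 : 0 <= Mx by apply: le_trans T0 TM.
rewrite ler_pdivrMr ?ltr0n //.
apply: le_trans nM _; rewrite mulrC; apply: ler_wpM2l => //.
by rewrite ler_nat.
Qed.
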